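(* Fix $c\in\mathbb{C}$, let $f_c(z)=z^2+c$, and for $q\in(0,1]$ let $z_q(0)=0$ and $$z_q(n)=\frac{1}{\Gamma(q)}\sum_{i=1}^{n}\frac{\Gamma(n-i+q)}{\Gamma(n-i+1)}\,f_c\big(z_q(i-1)\big),\qquad n\ge1.$$ As $q\uparrow 1$ this fractional-order Mandelbrot map becomes $z(n)=\sum_{i=1}^{n}f_c(z(i-1))$, $z(0)=0$. The set of parameters $c\in\mathbb{C}$ for which this sequence $(z(n))_{n\ge0}$ is bounded differs from the classical Mandelbrot set $\{c\in\mathbb{C}:(f_c^{\,n}(0))_{n\ge1}\text{ bounded}\}$.
   Context: The recursion is the numerical solution of the Caputo-like fractional difference initial value problem $\Delta^q z(t)=f_c(z(t+q-1))$, $t\in\mathbb{N}_{1-q}$, $z(0)=0$, of order $q$; the set of $c$ for which it stays bounded is the fractional-order Mandelbrot set. $\Gamma$ is Euler's Gamma function. *)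

(* Defs.v *)
From HB Require Import structures.
From mathcomp Require Import all_boot all_order all_algebra.
From mathcomp Require Import complex.
From mathcomp Require Import reals.
Set Implicit Arguments. Unset Strict Implicit. Unset Printing Implicit Defensive.
Import Order.TTheory GRing.Theory Num.Theory.
Local Open Scope ring_scope.
Local Open Scope complex_scope.

Definition fc (R : realType) (c z : R[i]) : R[i] := z ^+ 2 + c.

(* history [:: z(0); ...; z(n)] of the q = 1 limit map
   z(0) = 0,  z(n) = \sum_{i=1}^{n} f_c(z(i-1)). *)
Fixpoint zhist (R : realType) (c : R[i]) (n : nat) : seq R[i] :=
  match n with
  | 0 => [:: 0]
  | m.+1 => let h := zhist c m in
            rcons h (\sum_(1 <= i < m.+2) fc c (nth 0 h i.-1))
  end.

Definition z1 (R : realType) (c : R[i]) (n : nat) : R[i] := nth 0 (zhist c n) n.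

Definition fc_iter (R : realType) (c : R[i]) (n : nat) : R[i] := iter n (fc c) 0.

Definition bounded_seq (R : realType) (u : nat -> R[i]) : Prop :=
  exists M : R, forall n, `|u n| <= M%:C.

Definition frac1_set (R : realType) : R[i] -> Prop :=
  fun c => bounded_seq (z1 c).

Definition mandelbrot (R : realType) : R[i] -> Prop :=
  fun c => bounded_seq (fun n => fc_iter c n.+1).

(* Main.v *)
Require Import Defs.
From mathcomp Require Import all_boot all_order all_algebra complex reals.
From mathcomp Require Import lra.
Set Implicit Arguments. Unset Strict Implicit. Unset Printing Implicit Defensive.
Import Order.TTheory GRing.Theory Num.Theory.
Local Open Scope ring_scope.
Local Open Scope complex_scope.

Section P.
Variable R : realType.
Implicit Types c : R[i].

Lemma size_zhist c n : size (zhist c n) = n.+1.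
Proof. by elim: n => [|n IH] //=; rewrite size_rcons IH. Qed.

Lemma nth_zhist c n i : (i <= n)%N -> nth 0 (zhist c n) i = z1 c i.
Proof.
elim: n => [|n IH]; first by rewrite leqn0 => /eqP ->.
rewrite leq_eqVlt => /orP [/eqP ->|Hi] //.
rewrite /= nth_rcons size_zhist Hi; exact: IH.
Qed.

Lemma z1S_sum c n : z1 c n.+1 = \sum_(1 <= i < n.+2) fc c (z1 c i.-1).
Proof.
rewrite /z1 /= nth_rcons size_zhist ltnn eqxx.
apply: eq_big_nat => i /andP [H1 H2]; congr fc; apply: nth_zhist.
by case: i H1 H2.
Qed.

Lemma z1S c n : z1 c n.+1 = z1 c n + fc c (z1 c n).
Proof.
case: n => [|n].
  by rewrite z1S_sum big_nat1 /z1 /= add0r.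
by rewrite z1S_sum big_nat_recr //= -z1S_sum.
Qed.

Definition a (n : nat) : R := iter n (fun x => x + x ^+ 2 + 4^-1) 0.
Definition b (n : nat) : R := iter n (fun x => x ^+ 2 + 4^-1) 0.

Definition c0 : R[i] := (4^-1 : R)%:C.

Lemma z1_a n : z1 c0 n = (a n)%:C.
Proof.
elim: n => [|n IH]; first by [].
by rewrite z1S IH /= /fc /c0 !rmorphD rmorphXn addrA.
Qed.

Lemma a_ge n : (n%:R / 4 <= a n).
Proof.
elim: n => [|n IH]; first by rewrite mul0r.
rewrite /= -/(a n) mulrSr mulrDl mul1r.
have : 0 <= a n ^+ 2 by apply: sqr_ge0.
move: IH; set x := a n; set y := n%:R / 4; move=> IH H. 
by apply: lerD => //; apply: le_trans IH _; rewrite lerDl.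
Qed.

Lemma fc_b n : fc_iter c0 n = (b n)%:C.
Proof.
elim: n => [|n IH]; first by [].
by rewrite /fc_iter /= -/(fc_iter c0 n) IH /fc rmorphD rmorphXn.
Qed.

Lemma b_bnd n : 0 <= b n <= 2^-1.
Proof.
elim: n => [|n IH]; first by rewrite /= lexx invr_ge0 ler0n.
rewrite /= -/(b n); move: IH; set x := b n => /andP [H0 H1].
apply/andP; split.
  by rewrite addr_ge0 ?sqr_ge0 // invr_ge0 ler0n.
have : x ^+ 2 <= 4^-1.
  have -> : (4^-1 : R) = 2^-1 ^+ 2 by rewrite expr2 -invfM -natrM.
  by rewrite lerXn2r // ?nnegrE // invr_ge0 ler0n.
move=> H; apply: le_trans (lerD H (lexx _)) _.
lra.
Qed.

End P.

Theorem proposition3 (R : realType) : frac1_set (R:=R) <> mandelbrot (R:=R).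
Proof.
move=> H.
have Hm : mandelbrot ((4^-1 : R)%:C).
  exists (2^-1); move=> n; rewrite (@fc_b R).
  have /andP [H0 H1] := @b_bnd R n.+1.
  by rewrite ger0_norm ?ler0c // lecR.
rewrite -H in Hm; case: Hm => M HM.
have Hle n : (n%:R / 4 <= M).
  apply: le_trans (@a_ge R n) _.
  have := HM n; rewrite (@z1_a R).
  have H0 : 0 <= @a R n by apply: le_trans (@a_ge R n); rewrite divr_ge0 ?ler0n.
  by rewrite ger0_norm ?ler0c // lecR.
have := Hle (Num.truncn (4 * M)).+1.
rewrite ler_pdivrMr ?ltr0n // mulrC.
apply/negP; rewrite -ltNge.
exact: real_truncnS_gt (num_real _).
Qed.
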